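(* Let $\Gamma$, $\varphi$, $\Xi$, $(\cdot)^\flat$ and $\mathscr{M}$ be as in the context. For every $\xi\in\Xi$, every base $\mathscr{X}\supseteq\mathscr{M}$ and every finite multiset of atoms $U$: $\Vdash^{U}_{\mathscr{X}}\xi^\flat$ if and only if $\Vdash^{U}_{\mathscr{X}}\xi$.
   Context: Fix a countably infinite set $\mathbb{A}$ of atoms. IMLL formulas: $\varphi::= p\in\mathbb{A}\mid\varphi\otimes\varphi\mid \mathrm{I}\mid\varphi\multimap\varphi$; multisets are finite, ''$,$'' is multiset union. An atomic rule is $(P_1\triangleright p_1,\dots,P_n\triangleright p_n)\Rightarrow p$ ($n\ge0$, $P_i$ finite multisets of atoms, $\triangleright p$ abbreviating $\emptyset\triangleright p$); a base is a set of atomic rules. Derivability $\vdash_{\mathscr{B}}$ is the least relation with (Ref) $[p]\vdash_{\mathscr{B}}p$; (App) if $(P_1\triangleright p_1,\dots,P_n\triangleright p_n)\Rightarrow p\in\mathscr{B}$ and $S_i,P_i\vdash_{\mathscr{B}}p_i$ for all $i$, then $S_1,\dots,S_n\vdash_{\mathscr{B}}p$. Support: (At) $\Vdash^{P}_{\mathscr{B}}p$ iff $P\vdash_{\mathscr{B}}p$; ($\otimes$) $\Vdash^{P}_{\mathscr{B}}\varphi\otimes\psi$ iff for every $\mathscr{X}\supseteq\mathscr{B}$, multiset of atoms $U$, atom $p$, if $\varphi,\psi\Vdash^{U}_{\mathscr{X}}p$ then $\Vdash^{P,U}_{\mathscr{X}}p$; ($\mathrm{I}$) $\Vdash^{P}_{\mathscr{B}}\mathrm{I}$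 iff for every $\mathscr{X}\supseteq\mathscr{B}$, $U$, $p$, if $\Vdash^{U}_{\mathscr{X}}p$ then $\Vdash^{P,U}_{\mathscr{X}}p$; ($\multimap$) $\Vdash^{P}_{\mathscr{B}}\varphi\multimap\psi$ iff $\varphi\Vdash^{P}_{\mathscr{B}}\psi$; (comma) for nonempty $\Gamma,\Delta$, $\Vdash^{P}_{\mathscr{B}}\Gamma,\Delta$ iff $P=U,V$ for some $U,V$ with $\Vdash^{U}_{\mathscr{B}}\Gamma$, $\Vdash^{V}_{\mathscr{B}}\Delta$ (singleton $[\varphi]$ supported iff $\varphi$ is); (Inf) for nonempty $\Gamma$, $\Gamma\Vdash^{P}_{\mathscr{B}}\varphi$ iff for every $\mathscr{X}\supseteq\mathscr{B}$ and $U$, if $\Vdash^{U}_{\mathscr{X}}\Gamma$ then $\Vdash^{P,U}_{\mathscr{X}}\varphi$. Fix a finite multiset $\Gamma$ and formula $\varphi$; $\Xi$ is the set of all subformulas of formulas in $\Gamma$ and of $\varphi$. $(\cdot)^\flat:\Xi\to\mathbb{A}$ is an injection with $p^\flat=p$ for atoms $p\in\Xi$ and, for non-atomic $\xi$, $\xi^\flat$ an atom not occurring in $\Xi$. The base $\mathscr{M}$ consists of: for each $\sigma\multimap\tau\in\Xi$, $(\sigma^\flat\triangleright\tau^\flat)\Rightarrow(\sigma\multimap\tau)^\flat$ and $(\triangleright(\sigma\multimap\tau)^\flat,\triangleright\sigma^\flat)\Rightarrow\tau^\flat$; for each $\sigma\otimes\tau\in\Xi$, $(\triangleright\sigma^\flat,\triangleright\tau^\flat)\Rightarrow(\sigma\otimes\tau)^\flat$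 and, for every atom $p$, $(\triangleright(\sigma\otimes\tau)^\flat,\ \sigma^\flat,\tau^\flat\triangleright p)\Rightarrow p$; if $\mathrm{I}\in\Xi$, $\Rightarrow\mathrm{I}^\flat$ and, for every atom $p$, $(\triangleright\mathrm{I}^\flat,\triangleright p)\Rightarrow p$. *)

(* Defs.v *)
From Stdlib Require List.
From mathcomp Require Import all_boot.
From mathcomp Require Import finmap multiset.

Set Implicit Arguments.
Unset Strict Implicit.
Unset Printing Implicit Defensive.

Local Open Scope mset_scope.

Definition atom := nat.

Definition amset := {mset atom}.

Inductive form : Type :=
  | Atom of atom
  | Tensor of form & form
  | One
  | Lolli of form & form.

Inductive subform : form -> form -> Prop :=
  | sub_refl phi : subform phi phi
  | sub_tensorl a b phi : subform phi a -> subform phi (Tensor a b)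
  | sub_tensorr a b phi : subform phi b -> subform phi (Tensor a b)
  | sub_lollil a b phi : subform phi a -> subform phi (Lolli a b)
  | sub_lollir a b phi : subform phi b -> subform phi (Lolli a b).

(* Atomic rules (P_1 |> p_1, ..., P_n |> p_n) => p. *)
Record arule := ARule { prems : seq (amset * atom); concl : atom }.

Definition base := arule -> Prop.

Definition extends (X B : base) : Prop := forall r, B r -> X r.

(* Derivability S |-_B p, with an auxiliary relation for the premises:
   derivs B ps S means S = S_1,...,S_n with S_i,P_i |-_B p_i. *)
Inductive deriv (B : base) : amset -> atom -> Prop :=
  | d_ref p : deriv B [mset p] p
  | d_app r S : B r -> derivs B (prems r) S -> deriv B S (concl r)
with derivs (B : base) : seq (amset * atom) -> amset -> Prop :=
  | ds_nil : derivs B [::] mset0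
  | ds_cons P q ps S T :
      deriv B (S `+` P) q -> derivs B ps T -> derivs B ((P, q) :: ps) (S `+` T).

Fixpoint supp (B : base) (P : amset) (phi : form) {struct phi} : Prop :=
  match phi with
  | Atom p => deriv B P p
  | Tensor a b =>
      forall (X : base) (U : amset) (p : atom), extends X B ->
        (* a, b ||-^U_X p *)
        (forall (Y : base) (V : amset), extends Y X ->
           (exists V1 V2, V = V1 `+` V2 /\ supp Y V1 a /\ supp Y V2 b) ->
           deriv Y (U `+` V) p) ->
        deriv X (P `+` U) p
  | One =>
      forall (X : base) (U : amset) (p : atom), extends X B ->
        deriv X U p -> deriv X (P `+` U) p
  | Lolli a b =>
      (* a ||-^P_B b *)
      forall (X : base) (U : amset), extends X B ->
        supp X U a -> supp X (P `+` U) b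
  end.

Definition inXi (Gamma : seq form) (phi : form) (xi : form) : Prop :=
  subform xi phi \/ exists2 g, Stdlib.Lists.List.In g Gamma & subform xi g.

Definition flat_ok (Gamma : seq form) (phi : form) (flat : form -> atom) : Prop :=
  (forall x y, inXi Gamma phi x -> inXi Gamma phi y -> flat x = flat y -> x = y) /\
  (forall p, inXi Gamma phi (Atom p) -> flat (Atom p) = p) /\
  (forall x, inXi Gamma phi x -> (forall p, x <> Atom p) ->
     ~ inXi Gamma phi (Atom (flat x))).

Definition baseM (Gamma : seq form) (phi : form) (flat : form -> atom) : base :=
  fun r =>
    (exists s t, inXi Gamma phi (Lolli s t) /\
       (r = ARule [:: ([mset flat s], flat t)] (flat (Lolli s t)) \/
        r = ARule [:: (mset0, flat (Lolli s t)); (mset0, flat s)] (flat t)))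
    \/
    (exists s t, inXi Gamma phi (Tensor s t) /\
       (r = ARule [:: (mset0, flat s); (mset0, flat t)] (flat (Tensor s t)) \/
        exists p : atom,
          r = ARule [:: (mset0, flat (Tensor s t)); ([mset flat s; flat t], p)] p))
    \/
    (inXi Gamma phi One /\
       (r = ARule [::] (flat One) \/
        exists p : atom, r = ARule [:: (mset0, flat One); (mset0, p)] p)).

(* Main.v *)
Require Import Defs.
From mathcomp Require Import all_boot.
From mathcomp Require Import finmap multiset.

Set Implicit Arguments.
Local Open Scope mset_scope.

Scheme deriv_ind2 := Induction for deriv Sort Prop
with derivs_ind2 := Induction for derivs Sort Prop.

Lemma deriv_mono (B X : base) : extends X B ->
  forall S p, deriv B S p -> deriv X S p.
Proof.
move=> hX.
apply: (@deriv_ind2 B (fun S p _ => deriv X S p) (fun ps S _ => derivs X ps S)).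
- by move=> p; apply: d_ref.
- by move=> r S Br _ h; apply: d_app; [apply: hX|].
- exact: ds_nil.
- by move=> P q ps S T _ h1 _ h2; apply: ds_cons.
Qed.

Lemma app0 (X : base) c : X (ARule [::] c) -> deriv X mset0 c.
Proof. move=> h; exact: (d_app h (ds_nil X)). Qed.

Lemma app1 (X : base) P q c S : X (ARule [:: (P, q)] c) ->
  deriv X (S `+` P) q -> deriv X S c.
Proof.
move=> h h1; have := d_app h (ds_cons h1 (ds_nil X)).
by rewrite msetD0.
Qed.

Lemma app2 (X : base) P1 q1 P2 q2 c S1 S2 :
  X (ARule [:: (P1, q1); (P2, q2)] c) ->
  deriv X (S1 `+` P1) q1 -> deriv X (S2 `+` P2) q2 -> deriv X (S1 `+` S2) c.
Proof.
move=> h h1 h2; have := d_app h (ds_cons h1 (ds_cons h2 (ds_nil X))).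
by rewrite msetD0.
Qed.

Lemma subform_trans x y z : subform x y -> subform y z -> subform x z.
Proof.
move=> hxy hyz; elim: hyz hxy => //; by intros; constructor; auto.
Qed.

Lemma inXi_sub G f x y : inXi G f y -> subform x y -> inXi G f x.
Proof.
case=> [h|[g hg h]] hs; [left|right]; first exact: subform_trans hs h.
by exists g => //; exact: subform_trans hs h.
Qed.

Lemma extends_refl X : extends X X. Proof. by []. Qed.
Lemma extends_trans X Y Z : extends X Y -> extends Y Z -> extends X Z.
Proof. by move=> h1 h2 r /h2 /h1. Qed.

Theorem mainTheorem14 (Gamma : seq form) (phi : form) (flat : form -> atom) :
  flat_ok Gamma phi flat ->
  forall xi : form, inXi Gamma phi xi ->
  forall (X : base) (U : amset), extends X (baseM Gamma phi flat) ->
    (supp X U (Atom (flat xi)) <-> supp X U xi).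
Proof.
move=> [_ [hat _]].
elim=> [p|s IHs t IHt|| s IHs t IHt] hxi X U hX /=.
- by rewrite hat.
- have hs : inXi Gamma phi s by apply: inXi_sub hxi _; apply: sub_tensorl; constructor.
  have ht : inXi Gamma phi t by apply: inXi_sub hxi _; apply: sub_tensorr; constructor.
  split.
  + move=> hU Y W p hY hW.
    have hYM := extends_trans hY hX.
    apply: (@app2 Y mset0 (flat (Tensor s t)) [mset flat s; flat t] p p).
    * apply: hYM; right; left; exists s, t; split => //; right; by exists p.
    * by rewrite msetD0; apply: deriv_mono hU.
    * apply: hW => //; exists [mset flat s], [mset flat t]; split => //.
      split; [apply/(IHs hs) => //|apply/(IHt ht) => //]; exact: d_ref.
  + move=> hU.
    have := hU X mset0 (flat (Tensor s t)) (@extends_refl X).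
    rewrite msetD0; apply => Z V hZ [V1 [V2 [-> [h1 h2]]]].
    have hZM := extends_trans hZ hX.
    rewrite mset0D; apply: (@app2 Z mset0 (flat s) mset0 (flat t)).
    * apply: hZM; right; left; exists s, t; split => //; by left.
    * by rewrite msetD0; apply/(IHs hs).
    * by rewrite msetD0; apply/(IHt ht).
- split.
  + move=> hU Y W p hY hW.
    have hYM := extends_trans hY hX.
    apply: (@app2 Y mset0 (flat One) mset0 p p).
    * apply: hYM; right; right; split => //; right; by exists p.
    * by rewrite msetD0; apply: deriv_mono hU.
    * by rewrite msetD0.
  + move=> hU.
    have := hU X mset0 (flat One) (@extends_refl X).
    rewrite msetD0; apply; apply: app0; apply: hX; right; right; split => //; by left.
- have hs : inXi Gamma phi s by apply: inXi_sub hxi _; apply: sub_lollil; constructor.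
  have ht : inXi Gamma phi t by apply: inXi_sub hxi _; apply: sub_lollir; constructor.
  split.
  + move=> hU Y V hY hV.
    have hYM := extends_trans hY hX.
    apply/(IHt ht) => //.
    apply: (@app2 Y mset0 (flat (Lolli s t)) mset0 (flat s)).
    * apply: hYM; left; exists s, t; split => //; by right.
    * by rewrite msetD0; apply: deriv_mono hU.
    * by rewrite msetD0; apply/(IHs hs).
  + move=> hU.
    apply: (@app1 X [mset flat s] (flat t)).
    * apply: hX; left; exists s, t; split => //; by left.
    * apply/(IHt ht) => //; apply: hU => //; apply/(IHs hs) => //; exact: d_ref.
Qed.
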